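(* Let $(E,X,Y)$, with $X=(X_1,\dots,X_d)$, be generated by a structural causal model whose graph is a DAG, whose distribution is faithful (and Markov) with respect to it, and in which $E$ is exogenous. Suppose $X=X_O\,\dot\cup\,X_H$, where only the variables $X_O$ are observed. Define $\mathcal{I}_O:=\{S\subseteq O\mid Y\perp\!\!\!\perp E\mid X_S\}$, call $S\subseteq O$ minimally invariant (among observed sets) if $S\in\mathcal{I}_O$ and no proper subset of $S$ lies in $\mathcal{I}_O$, and let $S_{\mathrm{IAS},O}$ be the union of all such sets (the empty set if there are none). Then $S_{\mathrm{IAS},O}\subseteq\mathrm{AN}_Y$.
   Context: $O\subseteq[d]$ indexes the observed predictors and $X_S=(X_j)_{j\in S}$. $\mathrm{AN}_Y$ denotes the set of ancestors of $Y$ in the DAG over all variables (observed and hidden), indices identified with variables. *)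

(* Defs.v *)
From mathcomp Require Import all_boot.
Set Implicit Arguments. Unset Strict Implicit. Unset Printing Implicit Defensive.

(* Variables of the model: None = E, Some None = Y, Some (Some j) = X_j. *)
Definition node (d : nat) : finType := option (option 'I_d).
Definition NE {d} : node d := None.
Definition NY {d} : node d := Some None.
Definition NX {d} (j : 'I_d) : node d := Some (Some j).

Section Graph.
Variable V : finType.
Variable g : rel V. (* g u v  <=>  directed edge u -> v *)

Definition acyclic : Prop := forall u v, g u v -> ~~ connect g v u.

Definition ancestor (u v : V) : bool := connect g u v.

Definition adj (u v : V) : bool := g u v || g v u.

Definition is_upath (a b : V) (s : seq V) : bool :=
  [&& s != [::], head a s == a, last a s == b, uniq s & path adj a (behead s)].

Definition blocked (Z : {set V}) (a : V) (s : seq V) : Prop :=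
  exists i, 0 < i /\ i.+1 < size s /\
    (let m := nth a s i in
     let l := nth a s i.-1 in
     let r := nth a s i.+1 in
     if g l m && g r m then ~~ [exists w in Z, connect g m w]
     else m \in Z).

Definition dsep (A B Z : {set V}) : Prop :=
  forall a b s, a \in A -> b \in B -> is_upath a b s -> blocked Z a s.

(* An independence model:  CI A B Z  means  X_A _||_ X_B | X_Z  *)
Definition indep_model := {set V} -> {set V} -> {set V} -> Prop.

Definition markov (CI : indep_model) : Prop :=
  forall A B Z : {set V}, [disjoint A & B] -> [disjoint A & Z] -> [disjoint B & Z] ->
    dsep A B Z -> CI A B Z.

Definition faithful (CI : indep_model) : Prop :=
  forall A B Z : {set V}, [disjoint A & B] -> [disjoint A & Z] -> [disjoint B & Z] ->
    CI A B Z -> dsep A B Z.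
End Graph.

Definition exogenous d (g : rel (node d)) : Prop := forall v, ~~ g v NE.

Definition Xset d (S : {set 'I_d}) : {set node d} := NX @: S.

Definition invariant d (CI : indep_model (node d)) (O S : {set 'I_d}) : Prop :=
  S \subset O /\ CI [set NY] [set NE] (Xset S).

Definition min_invariant d (CI : indep_model (node d)) (O S : {set 'I_d}) : Prop :=
  invariant CI O S /\ forall S' : {set 'I_d}, S' \proper S -> ~ invariant CI O S'.

Definition in_SIAS d (CI : indep_model (node d)) (O : {set 'I_d}) (j : 'I_d) : Prop :=
  exists S, min_invariant CI O S /\ j \in S.

(* Main.v *)
Require Import Defs.
From mathcomp Require Import all_boot.
From mathcomp Require Import zify.
From Stdlib Require Import Classical.

Lemma nb_coll (V : finType) (g : rel V) (Z : {set V}) (a : V) (s : seq V) i :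
  ~ blocked g Z a s -> 0 < i -> i.+1 < size s ->
  g (nth a s i.-1) (nth a s i) -> g (nth a s i.+1) (nth a s i) ->
  [exists w in Z, connect g (nth a s i) w].
Proof.
move=> nb hi hs h1 h2; case E: [exists w in Z, _] => //; exfalso.
apply: nb; exists i; split=> //; split=> //=; by rewrite h1 h2 E.
Qed.

Lemma fwd (V : finType) (g : rel V) (Z : {set V}) (a b m : V) (s : seq V) :
  (forall v, ~~ g v b) -> last a s = b ->
  (forall i, i.+1 < size s -> adj g (nth a s i) (nth a s i.+1)) ->
  ~ blocked g Z a s -> (forall w, w \in Z -> connect g w a) ->
  forall n k, size s - k = n -> k.+1 < size s -> connect g m (nth a s k) ->
  g (nth a s k) (nth a s k.+1) -> connect g m a.
Proof.
move=> exo hl hp nb hZ n; elim: n => [|n IH] k hn hk hm he.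
  exfalso; lia.
have hm' : connect g m (nth a s k.+1) := connect_trans hm (connect1 he).
case: (ltnP k.+2 (size s)) => hk2.
  case hr: (g (nth a s k.+2) (nth a s k.+1)).
    have := @nb_coll _ g Z a s k.+1 nb erefl hk2 he hr.
    move/existsP=> [w /andP[wZ cw]].
    exact: connect_trans hm' (connect_trans cw (hZ w wZ)).
  apply: (IH k.+1) => //; first lia.
  by have := hp k.+1 hk2; rewrite /adj hr orbF.
have e : k.+1 = (size s).-1 by lia.
rewrite e nth_last hl in he.
by have := exo (nth a s k); rewrite he.
Qed.

Lemma bwd (V : finType) (g : rel V) (Z : {set V}) (a m : V) (s : seq V) :
  nth a s 0 = a ->
  (forall i, i.+1 < size s -> adj g (nth a s i) (nth a s i.+1)) ->
  ~ blocked g Z a s -> (forall w, w \in Z -> connect g w a) ->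
  forall k, k < size s -> 0 < k -> connect g m (nth a s k) ->
  g (nth a s k) (nth a s k.-1) -> connect g m a.
Proof.
move=> h0 hp nb hZ; elim=> [|k IH] // hk _ hm he.
have hm' : connect g m (nth a s k) := connect_trans hm (connect1 he).
case: k IH hk hm he hm' => [|k] IH hk hm he hm'.
  by rewrite h0 in hm'.
case hl: (g (nth a s k) (nth a s k.+1)).
  have := @nb_coll _ g Z a s k.+1 nb erefl hk hl he.
  move/existsP=> [w /andP[wZ cw]].
  exact: connect_trans hm' (connect_trans cw (hZ w wZ)).
apply: IH => //; first lia.
have : k.+1 < size s by lia.
by move/hp; rewrite /adj hl /=.
Qed.

Lemma upath_adj (V : finType) (g : rel V) (a b : V) (s : seq V) :
  is_upath g a b s ->
  [/\ nth a s 0 = a, last a s = b &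
     forall i, i.+1 < size s -> adj g (nth a s i) (nth a s i.+1)].
Proof.
case/and5P; case: s => [|x p] // _ /eqP /= hx /eqP hl _ hp; subst x.
split=> // i hi.
by move/pathP: hp => /(_ a i hi).
Qed.

Lemma NY_Xset d (S : {set 'I_d}) : (NY : node d) \notin Xset S.
Proof. by apply/imsetP => -[x _]. Qed.

Lemma NE_Xset d (S : {set 'I_d}) : (NE : node d) \notin Xset S.
Proof. by apply/imsetP => -[x _]. Qed.

Theorem proposition6 (d : nat) (g : rel (node d))
    (CI : indep_model (node d)) (O : {set 'I_d}) :
  acyclic g -> exogenous g -> markov g CI -> faithful g CI ->
  forall j : 'I_d, in_SIAS CI O j -> ancestor g (NX j) NY.
Proof.
move=> _ exo mk fth j [S0 [[[SO CIS] Smin] jS]].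
have dYE : [disjoint [set (NY : node d)] & [set NE]] by rewrite disjoints1 inE.
have dS : forall S0' : {set 'I_d}, [disjoint [set (NY : node d)] & Xset S0'] /\
            [disjoint [set (NE : node d)] & Xset S0'].
  by move=> S0'; rewrite !disjoints1 NY_Xset NE_Xset.
have dsS := fth _ _ _ dYE (proj1 (dS S0)) (proj2 (dS S0)) CIS.
pose T := [set k in S0 | connect g (NX k) NY].
have TS : T \subset S0 by apply/subsetP => k; rewrite inE => /andP[].
have hZ : forall w, w \in Xset T -> connect g w NY.
  by move=> w /imsetP [k]; rewrite inE => /andP[_ hk] ->.
have dsT : dsep g [set NY] [set NE] (Xset T).
  move=> a b s; rewrite !inE => /eqP -> /eqP -> hs.
  have [h0 hl hp] := upath_adj _ _ _ _ _ hs.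
  have [i [hi [hsi]]] := dsS NY NE s (set11 _) (set11 _) hs.
  move=> /=; case hc: (_ && _) => Hb.
    exists i; split=> //; split=> //=; rewrite hc.
    apply: contra Hb => /existsP [w /andP [wT cw]].
    apply/existsP; exists w; rewrite cw andbT.
    by move: wT => /imsetP [k kT ->]; apply/imsetP; exists k => //; apply: (subsetP TS).
  case: (classic (blocked g (Xset T) NY s)) => // nb; exfalso.
  move: Hb => /imsetP [k kS ek].
  have nk : ~~ connect g (NX k) NY.
    apply/negP => ck; apply: nb; exists i; split=> //; split=> //=; rewrite hc.
    by rewrite ek; apply/imsetP; exists k => //; rewrite inE kS ck.
  move/negP: nk; apply.
  have hadjl : adj g (nth NY s i.-1) (nth NY s i).
    by have := hp i.-1; rewrite prednK //; apply; lia.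
  have hadjr := hp i hsi.
  move: hc hadjl hadjr; rewrite /adj.
  case el: (g (nth NY s i.-1) (nth NY s i)); case er: (g (nth NY s i.+1) (nth NY s i)) => //= _; rewrite ?orbF ?orbT.
  - move=> _ hr; rewrite -ek.
    apply: (@fwd _ g (Xset T) NY NE _ s exo hl hp nb hZ _ i erefl hsi) => //.
  - move=> hl' _; rewrite -ek.
    apply: (@bwd _ g (Xset T) NY _ s h0 hp nb hZ i _ hi) => //; lia.
  - move=> hl' hr; rewrite -ek.
    apply: (@fwd _ g (Xset T) NY NE _ s exo hl hp nb hZ _ i erefl hsi) => //.
have CIT := mk _ _ _ dYE (proj1 (dS T)) (proj2 (dS T)) dsT.
have eTS : T = S0.
  apply/eqP; rewrite eqEsubset TS /=.
  apply/negPn/negP => nST.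
  apply: (Smin T); first by rewrite properE TS.
  split=> //; exact: subset_trans TS SO.
by move: jS; rewrite -eTS inE => /andP[].
Qed.
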